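(* Consider the $2\times 1$ merge network with parameters $c>0$, $k>0$, $\eta\in(0,\tfrac12)$, constant downstream queue length $Q\ge0$, upstream capacities $c_1=c$, $c_2=kc$, inflows $f_i=\eta c_i$, and weights $\gamma_0,\gamma_1,\gamma_2>0$, operated under the generalized backpressure rule, in regime R1 with unsaturated upstream queue $u$ and saturated upstream queue $s$. Suppose that at time $t\ge1$, $p_{max}(t)=p_s(t)$ and the saturated queue is the one activated, i.e. $i^*(t)=s$. Then: (a) if $q_u(t)>f_u$, then $\tilde p_{max}(t+2)<p_{max}(t)$; (b) if $q_u(t)=f_u$ and $\Delta p(t)=0$, then $i^*(t+1)=i^*(t+2)=u$. In other words, $q_s$ is activated at most once consecutively and it is followed by two activations of $q_u$.
   Context: Model: discrete time; two upstream queues $q_1(t),q_2(t)\ge0$ merge into a downstream queue of constant length $Q$. Priorities: $p_i(t)=(\gamma_i q_i(t)-\gamma_0 Q)c_i$. At each step exactly one upstream queue, denoted $i^*(t)$, is activated, one of maximal priority (ties broken arbitrarily); the activated queue evolves as $q_i(t+1)=q_i(t)-\min(q_i(t),c_i)+f_i$, the other as $q_j(t+1)=q_j(t)+f_j$. $p_{max}(t)=\max_i p_i(t)$; $\tilde p_{max}(t)=\min_{v\in\{t-1,t\}}p_{max}(v)$; $\Delta p(t)=p_{i^*(t)}(t)-p_j(t)$ with $j$ the non-activated queue. $f_u$ is the minimal possible length $q_{u,min}$ of queue $u$. Regime R1: exactly one upstream queue, $u$, is unsaturated (outflow $\min(q_u,c_u)<c_u$), the other, $s$, is saturated (outflow equal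 to $c_s$ when activated). *)

(* Defs.v *)
From Stdlib Require Import Reals Lra.
Open Scope R_scope.

Inductive queue := Q1 | Q2.

Definition other (i : queue) : queue := match i with Q1 => Q2 | Q2 => Q1 end.

Definition cap (c k : R) (i : queue) : R :=
  match i with Q1 => c | Q2 => k * c end.

Definition inflow (c k eta : R) (i : queue) : R := eta * cap c k i.

Definition prio (c k g0 Q : R) (g : queue -> R) (q : nat -> queue -> R)
  (t : nat) (i : queue) : R :=
  (g i * q t i - g0 * Q) * cap c k i.

Definition pmax (c k g0 Q : R) (g : queue -> R) (q : nat -> queue -> R)
  (t : nat) : R :=
  Rmax (prio c k g0 Q g q t Q1) (prio c k g0 Q g q t Q2).

(* \tilde p_max(t) = min_{v in {t-1,t}} p_max(v)  (used for t >= 1) *)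
Definition pmax_tilde (c k g0 Q : R) (g : queue -> R) (q : nat -> queue -> R)
  (t : nat) : R :=
  Rmin (pmax c k g0 Q g q (t - 1)%nat) (pmax c k g0 Q g q t).

Definition delta_p (c k g0 Q : R) (g : queue -> R) (q : nat -> queue -> R)
  (istar : nat -> queue) (t : nat) : R :=
  prio c k g0 Q g q t (istar t) - prio c k g0 Q g q t (other (istar t)).

Definition backpressure (c k eta g0 Q : R) (g : queue -> R)
  (q : nat -> queue -> R) (istar : nat -> queue) : Prop :=
  (forall t i, 0 <= q t i) /\
  (forall t j, prio c k g0 Q g q t j <= prio c k g0 Q g q t (istar t)) /\
  (forall t, q (S t) (istar t) =
       q t (istar t) - Rmin (q t (istar t)) (cap c k (istar t))
       + inflow c k eta (istar t)) /\
  (forall t, q (S t) (other (istar t)) =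
       q t (other (istar t)) + inflow c k eta (other (istar t))).

(* Regime R1: u unsaturated (outflow < c_u), s = other u saturated (outflow = c_s),
   outflows being measured when the queue is activated. *)
Definition regime_R1 (c k : R) (q : nat -> queue -> R) (istar : nat -> queue)
  (u : queue) : Prop :=
  (forall t, istar t = u -> Rmin (q t u) (cap c k u) < cap c k u) /\
  (forall t, istar t = other u -> Rmin (q t (other u)) (cap c k (other u)) = cap c k (other u)).

(* Main.v *)
Require Import Defs.
From Stdlib Require Import Reals.
From Stdlib Require Import Lra Lia.
Open Scope R_scope.

Lemma mono_aux (gi ci g0 Q x y : R) : 0 < gi -> 0 < ci -> x < y ->
  (gi * x - g0 * Q) * ci < (gi * y - g0 * Q) * ci.
Proof.
  intros. apply Rmult_lt_compat_r; auto. apply Rplus_lt_compat_r.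
  apply Rmult_lt_compat_l; auto.
Qed.

Lemma other_cases (x u : queue) : x = u \/ x = other u.
Proof. destruct x, u; simpl; auto. Qed.

Lemma other_other u : other (other u) = u.
Proof. destruct u; reflexivity. Qed.

Lemma other_neq u : other u <> u.
Proof. destruct u; discriminate. Qed.

Lemma pmax_lt c k g0 Q g q t u X :
  prio c k g0 Q g q t u < X -> prio c k g0 Q g q t (other u) < X ->
  pmax c k g0 Q g q t < X.
Proof. unfold pmax; destruct u; simpl; intros; apply Rmax_lub_lt; auto. Qed.

Theorem corollary1 (c k eta Q g0 : R) (g : queue -> R)
  (q : nat -> queue -> R) (istar : nat -> queue) (u s : queue) (t : nat) :
  0 < c -> 0 < k -> 0 < eta -> eta < 1 / 2 -> 0 <= Q ->
  0 < g0 -> 0 < g Q1 -> 0 < g Q2 ->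
  backpressure c k eta g0 Q g q istar ->
  s = other u ->
  regime_R1 c k q istar u ->
  (1 <= t)%nat ->
  pmax c k g0 Q g q t = prio c k g0 Q g q t s ->
  istar t = s ->
  (q t u > inflow c k eta u ->
     pmax_tilde c k g0 Q g q (t + 2) < pmax c k g0 Q g q t) /\
  (q t u = inflow c k eta u -> delta_p c k g0 Q g q istar t = 0 ->
     istar (t + 1)%nat = u /\ istar (t + 2)%nat = u).
Proof.
  intros Hc Hk He He2 HQ Hg0 Hg1 Hg2 [Hnn [Hmax [Hact Hoth]]] Hs [Ru Rs] Ht Hpm Hist.
  assert (Hcap : forall i, 0 < cap c k i)
    by (intro i; destruct i; simpl; nra).
  assert (Hg : forall i, 0 < g i) by (intro i; destruct i; auto).
  assert (Hf : forall i, inflow c k eta i = eta * cap c k i) by reflexivity.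
  subst s.
  assert (qs1 : q (S t) (other u) = q t (other u) - cap c k (other u) + inflow c k eta (other u)).
  { rewrite <- Hist, Hact, Hist, (Rs t Hist). reflexivity. }
  assert (qu1 : q (S t) u = q t u + inflow c k eta u).
  { pose proof (Hoth t) as H. rewrite Hist, other_other in H. exact H. }
  assert (Hpu : prio c k g0 Q g q t u <= prio c k g0 Q g q t (other u)).
  { rewrite <- Hist. apply Hmax. }
  assert (Step2 : prio c k g0 Q g q (S t) (other u) < prio c k g0 Q g q (S t) u ->
     istar (S t) = u /\ q (S (S t)) u = inflow c k eta u /\
     q (S (S t)) (other u) = q (S t) (other u) + inflow c k eta (other u)).
  { intro Hlt.
    assert (Hi : istar (S t) = u).
    { destruct (other_cases (istar (S t)) u) as [E|E]; auto.
      pose proof (Hmax (S t) u) as H. rewrite E in H. lra. }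
    split; [exact Hi|]. split.
    - pose proof (Hact (S t)) as H. rewrite Hi in H. rewrite H.
      pose proof (Ru (S t) Hi) as R. revert R. unfold Rmin.
      destruct (Rle_dec (q (S t) u) (cap c k u)); intro R; lra.
    - pose proof (Hoth (S t)) as H. rewrite Hi in H. exact H. }
  assert (Hps1 : prio c k g0 Q g q (S t) (other u) < prio c k g0 Q g q t (other u)).
  { unfold prio. apply mono_aux; auto. rewrite qs1, Hf.
    pose proof (Hcap (other u)). nra. }
  split.
  - intro Hqu.
    unfold pmax_tilde. replace (t + 2 - 1)%nat with (S t) by lia.
    replace (t + 2)%nat with (S (S t)) by lia. rewrite Hpm.
    destruct (Rlt_or_le (prio c k g0 Q g q (S t) u) (prio c k g0 Q g q t (other u))) as [L|L].
    + eapply Rle_lt_trans; [apply Rmin_l|].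
      apply pmax_lt with (u := u); auto.
    + destruct (Step2 ltac:(lra)) as [_ [E1 E2]].
      eapply Rle_lt_trans; [apply Rmin_r|].
      apply pmax_lt with (u := u).
      * eapply Rlt_le_trans; [|exact Hpu]. unfold prio. apply mono_aux; auto. lra.
      * unfold prio. apply mono_aux; auto. rewrite E2, qs1, !Hf.
        pose proof (Hcap (other u)). nra.
  - intros Hqu Hd.
    unfold delta_p in Hd. rewrite Hist, other_other in Hd.
    assert (Hpu1 : prio c k g0 Q g q t u < prio c k g0 Q g q (S t) u).
    { unfold prio. apply mono_aux; auto. rewrite qu1, Hf. pose proof (Hcap u). nra. }
    destruct (Step2 ltac:(lra)) as [I1 [E1 E2]].
    replace (t + 1)%nat with (S t) by lia. replace (t + 2)%nat with (S (S t)) by lia.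
    split; auto.
    destruct (other_cases (istar (S (S t))) u) as [E|E]; auto.
    exfalso. pose proof (Hmax (S (S t)) u) as H. rewrite E in H.
    assert (A : prio c k g0 Q g q (S (S t)) u = prio c k g0 Q g q t u)
      by (unfold prio; rewrite E1, Hqu; reflexivity).
    assert (B : prio c k g0 Q g q (S (S t)) (other u) < prio c k g0 Q g q t (other u)).
    { unfold prio. apply mono_aux; auto. rewrite E2, qs1, !Hf.
      pose proof (Hcap (other u)). nra. }
    lra.
Qed.
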